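(* (1) For every tidy fixpoint formula $\xi=\eta x.\chi$, $\Omega_g(\xi)$ has parity $\eta$. (2) If $\phi,\psi$ are tidy fixpoint formulas with $\phi\sqsubseteq_C\psi$, then $\Omega_g(\phi)\le\Omega_g(\psi)$, and $\Omega_g(\phi)<\Omega_g(\psi)$ if $\phi$ and $\psi$ have different types. (3) For every closure cluster $C$ (of tidy formulas), $\mathit{cd}(C)=\mathit{ind}(C)=|\mathrm{Ran}(\Omega_g\restriction_C)|$, where $\mathit{ind}(C)$ is the maximal $n$ such that there are fixpoint formulas $\phi_1,\dots,\phi_n\in C$ with $\Omega_g(\phi_1)<\cdots<\Omega_g(\phi_n)$ and $\Omega_g(\phi_i),\Omega_g(\phi_{i+1})$ of different parity for all $i<n$.
   Context: Syntax. Formulas of the modal $\mu$-calculus are taken in negation normal form: $\phi ::= \top \mid \bot \mid p \mid \neg p \mid x \mid \phi\land\phi\mid\phi\lor\phi\mid\Diamond\phi\mid\Box\phi\mid\mu x.\phi\mid\nu x.\phi$, where $p$ ranges over proposition letters and $x$ over an infinite supply of variables (which occur only positively). The formulas $\top,\bot,p,\neg p,x$ are atomic. $\mathrm{FV}(\phi)$ and $\mathrm{BV}(\phi)$ are the sets of free and bound variables of $\phi$; $\phi$ is tidy if $\mathrm{FV}(\phi)\cap\mathrm{BV}(\phi)=\varnothing$. A fixpoint formula is one of the form $\eta x.\chi$ with $\eta\in\{\mu,\nu\}$; it has type $\eta$, where $\mu$ counts as odd and $\nu$ as even parity, and $\bar\eta$ denotes the other operator. $\chi[\xi/x]$ is the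 result of replacing every free occurrence of $x$ in $\chi$ by $\xi$; $\xi$ is free for $x$ in $\chi$ if no free variable of $\xi$ becomes bound in $\chi[\xi/x]$. Traces and closure. The trace relation $\rightarrow_C$: $\phi_0\odot\phi_1\rightarrow_C\phi_i$ for $\odot\in\{\land,\lor\}$, $i\in\{0,1\}$; $\heartsuit\phi\rightarrow_C\phi$ for $\heartsuit\in\{\Diamond,\Box\}$; $\eta x.\phi\rightarrow_C\phi[\eta x.\phi/x]$; atomic formulas have no successors. $\twoheadrightarrow_C$ is the reflexive transitive closure of $\rightarrow_C$, $\mathrm{Clos}(\phi)=\{\psi\mid\phi\twoheadrightarrow_C\psi\}$ (a finite set), and a trace is a finite or infinite sequence of formulas with consecutive members related by $\rightarrow_C$. Write $\phi\equiv_C\psi$ iff $\phi\twoheadrightarrow_C\psi$ and $\psi\twoheadrightarrow_C\phi$; its equivalence classes are (closure) clusters, and $C(\phi)$ is the cluster of $\phi$. Free subformulas. $\phi\trianglelefteq_f\psi$ iff $\psi=\chi[\phi/y]$ for some formula $\chi$ and variable $y$ with $y\in\mathrm{FV}(\chi)$ and $\phi$ free for $y$ in $\chi$. Closure order. For a formula $\psi$, write $\rho\twoheadrightarrow_C^{\psi}\sigma$ iff there is a trace $\rho=\chi_0\rightarrow_C\cdots\rightarrow_C\chi_n=\sigma$ ($n\ge0$) with $\psi\trianglelefteq_f\chi_i$ for all $i\le n$. For fixpoint formulas $\phi,\psi$: $\phi\sqsubseteq_C\psi$ iff $\psi\twoheadrightarrow_C^{\psi}\phi$; $\phi\sqsubset_C\psi$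 iff $\phi\sqsubseteq_C\psi$ and $\psi\not\sqsubseteq_C\phi$. Chains. An alternating $\sqsubset_C$-chain of length $n$ is a sequence $\eta_1x_1.\chi_1,\dots,\eta_nx_n.\chi_n$ of tidy fixpoint formulas with $\eta_ix_i.\chi_i\sqsubset_C\eta_{i+1}x_{i+1}.\chi_{i+1}$ and $\eta_{i+1}=\bar\eta_i$ for all $i<n$; it starts at the first and leads up to the last formula. For a tidy fixpoint formula $\xi$, $h^\uparrow(\xi)$ (resp. $h^\downarrow(\xi)$) is the maximal length of an alternating $\sqsubset_C$-chain starting at (resp. leading up to) $\xi$. For a cluster $C$, $\mathit{cd}(C)$ is the maximal length of an alternating $\sqsubset_C$-chain inside $C$. Global priority map. For a tidy fixpoint formula $\psi=\eta y.\phi$ let $d=\mathit{cd}(C(\psi))-h^\uparrow(\psi)$ and set $\Omega_g(\psi)=d$ if $d$ has parity $\eta$ and $\Omega_g(\psi)=d+1$ otherwise; $\Omega_g$ is undefined on non-fixpoint formulas. *)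

(* Defs.v *)
From Stdlib Require Import List Arith ZArith ClassicalEpsilon Relation_Operators.
Import ListNotations.
Set Implicit Arguments.

Inductive form : Type :=
| FTop | FBot
| FProp (p : nat) | FNProp (p : nat)
| FVar (x : nat)
| FAnd (a b : form) | FOr (a b : form)
| FDia (a : form) | FBox (a : form)
| FMu (x : nat) (a : form) | FNu (x : nat) (a : form).

Inductive fp := MuT | NuT.

Definition fp_bar (e : fp) : fp := match e with MuT => NuT | NuT => MuT end.

Definition ftype (f : form) : option fp :=
  match f with FMu _ _ => Some MuT | FNu _ _ => Some NuT | _ => None end.

Definition is_fix (f : form) : Prop := exists e, ftype f = Some e.

Definition has_parity (e : fp) (n : Z) : Prop :=
  match e with MuT => Z.odd n = true | NuT => Z.odd n = false end.

Fixpoint free_in (x : nat) (f : form) : Prop :=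
  match f with
  | FVar y => y = x
  | FAnd a b | FOr a b => free_in x a \/ free_in x b
  | FDia a | FBox a => free_in x a
  | FMu y a | FNu y a => y <> x /\ free_in x a
  | _ => False
  end.

Fixpoint bound_in (x : nat) (f : form) : Prop :=
  match f with
  | FAnd a b | FOr a b => bound_in x a \/ bound_in x b
  | FDia a | FBox a => bound_in x a
  | FMu y a | FNu y a => y = x \/ bound_in x a
  | _ => False
  end.

Definition tidy (f : form) : Prop := forall x, ~ (free_in x f /\ bound_in x f).

(* subst chi xi x = chi[xi/x]: replace every free occurrence of x by xi *)
Fixpoint subst (chi xi : form) (x : nat) : form :=
  match chi with
  | FVar y => if Nat.eqb y x then xi else FVar y
  | FAnd a b => FAnd (subst a xi x) (subst b xi x)
  | FOr a b => FOr (subst a xi x) (subst b xi x)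
  | FDia a => FDia (subst a xi x)
  | FBox a => FBox (subst a xi x)
  | FMu y a => if Nat.eqb y x then FMu y a else FMu y (subst a xi x)
  | FNu y a => if Nat.eqb y x then FNu y a else FNu y (subst a xi x)
  | c => c
  end.

(* xi is free for x in chi: no free variable of xi becomes bound in chi[xi/x] *)
Fixpoint free_for (xi : form) (x : nat) (chi : form) : Prop :=
  match chi with
  | FAnd a b | FOr a b => free_for xi x a /\ free_for xi x b
  | FDia a | FBox a => free_for xi x a
  | FMu y a | FNu y a =>
      y = x \/ ((free_in x a -> ~ free_in y xi) /\ free_for xi x a)
  | _ => True
  end.

Inductive step : form -> form -> Prop :=
| st_and_l a b : step (FAnd a b) a
| st_and_r a b : step (FAnd a b) b
| st_or_l a b : step (FOr a b) a
| st_or_r a b : step (FOr a b) b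
| st_dia a : step (FDia a) a
| st_box a : step (FBox a) a
| st_mu x a : step (FMu x a) (subst a (FMu x a) x)
| st_nu x a : step (FNu x a) (subst a (FNu x a) x).

Definition steps : form -> form -> Prop := clos_refl_trans form step.

Definition equivC (f g : form) : Prop := steps f g /\ steps g f.
Definition cluster (f : form) : form -> Prop := fun g => equivC f g.

Definition free_sub (phi psi : form) : Prop :=
  exists chi y, psi = subst chi phi y /\ free_in y chi /\ free_for phi y chi.

Inductive tr_in (psi : form) : form -> form -> Prop :=
| tr_refl r : free_sub psi r -> tr_in psi r r
| tr_step r r' s : free_sub psi r -> step r r' -> tr_in psi r' s -> tr_in psi r s.

Definition sqle (phi psi : form) : Prop :=
  is_fix phi /\ is_fix psi /\ tr_in psi psi phi.
Definition sqlt (phi psi : form) : Prop := sqle phi psi /\ ~ sqle psi phi.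

Definition tidy_fix (f : form) : Prop := tidy f /\ is_fix f.

Fixpoint alt_chain (l : list form) : Prop :=
  match l with
  | [] => True
  | a :: t =>
      tidy_fix a /\
      match t with
      | [] => True
      | b :: _ => sqlt a b /\
                  (forall e, ftype a = Some e -> ftype b = Some (fp_bar e)) /\
                  alt_chain t
      end
  end.

(* the maximum of a set of naturals (classical choice; the maximum exists in
   all cases used here since closures are finite) *)
Definition maxnat (P : nat -> Prop) : nat :=
  epsilon (inhabits 0) (fun n => P n /\ forall m, P m -> m <= n).

Definition h_up (xi : form) : nat :=
  maxnat (fun n => exists l, alt_chain (xi :: l) /\ length (xi :: l) = n).

Definition h_down (xi : form) : nat :=
  maxnat (fun n => exists l, alt_chain (l ++ [xi]) /\ length (l ++ [xi]) = n).

Definition cd (C : form -> Prop) : nat :=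
  maxnat (fun n => exists l, alt_chain l /\ Forall C l /\ length l = n).

Definition Omega_g (psi : form) : option Z :=
  match ftype psi with
  | None => None
  | Some e =>
      let d := (Z.of_nat (cd (cluster psi)) - Z.of_nat (h_up psi))%Z in
      Some (match e with
            | MuT => if Z.odd d then d else (d + 1)%Z
            | NuT => if Z.odd d then (d + 1)%Z else d
            end)
  end.

Fixpoint alt_incr (l : list Z) : Prop :=
  match l with
  | [] => True
  | a :: t =>
      match t with
      | [] => True
      | b :: _ => (a < b)%Z /\ Z.odd a <> Z.odd b /\ alt_incr t
      end
  end.

Definition ind (C : form -> Prop) : nat :=
  maxnat (fun n => exists l : list form,
    Forall (fun f => C f /\ is_fix f) l /\ length l = n /\
    exists ks, Forall2 (fun f k => Omega_g f = Some k) l ks /\ alt_incr ks).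

Definition range_Omega (C : form -> Prop) : Z -> Prop :=
  fun k => exists f, C f /\ Omega_g f = Some k.

(* Main.v *)
Require Import Defs.
From Stdlib Require Import List ZArith.
From Stdlib Require Import List Arith Lia ZArith Classical ClassicalEpsilon Relation_Operators Operators_Properties FunctionalExtensionality PropExtensionality.
Import ListNotations.


Fixpoint fsize (f : form) : nat :=
  match f with
  | FAnd a b | FOr a b => S (fsize a + fsize b)
  | FDia a | FBox a | FMu _ a | FNu _ a => S (fsize a)
  | _ => 1
  end.

Inductive sub (t : form) : form -> Prop :=
| sub_refl : sub t t
| sub_andl a b : sub t a -> sub t (FAnd a b)
| sub_andr a b : sub t b -> sub t (FAnd a b)
| sub_orl a b : sub t a -> sub t (FOr a b)
| sub_orr a b : sub t b -> sub t (FOr a b)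
| sub_dia a : sub t a -> sub t (FDia a)
| sub_box a : sub t a -> sub t (FBox a)
| sub_mu x a : sub t a -> sub t (FMu x a)
| sub_nu x a : sub t a -> sub t (FNu x a).

Inductive good (t : form) : form -> Prop :=
| good_refl : good t t
| good_andl a b : good t a -> good t (FAnd a b)
| good_andr a b : good t b -> good t (FAnd a b)
| good_orl a b : good t a -> good t (FOr a b)
| good_orr a b : good t b -> good t (FOr a b)
| good_dia a : good t a -> good t (FDia a)
| good_box a : good t a -> good t (FBox a)
| good_mu x a : ~ free_in x t -> good t a -> good t (FMu x a)
| good_nu x a : ~ free_in x t -> good t a -> good t (FNu x a).

Lemma subst_notfree : forall f t x, ~ free_in x f -> subst f t x = f.
Proof.
  induction f; intros t y H; simpl in *; auto.
  - destruct (Nat.eqb_spec x y); subst; auto. exfalso; auto.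
  - rewrite IHf1, IHf2; tauto.
  - rewrite IHf1, IHf2; tauto.
  - rewrite IHf; auto.
  - rewrite IHf; auto.
  - destruct (Nat.eqb_spec x y); auto. rewrite IHf; auto.
  - destruct (Nat.eqb_spec x y); auto. rewrite IHf; auto.
Qed.

Lemma free_for_notfree : forall chi xi y, ~ free_in y chi -> free_for xi y chi.
Proof.
  induction chi; intros xi y H; simpl in *; auto.
  - split; [apply IHchi1|apply IHchi2]; tauto.
  - split; [apply IHchi1|apply IHchi2]; tauto.
  - destruct (Nat.eq_dec x y); auto. right; split; [tauto| apply IHchi; tauto].
  - destruct (Nat.eq_dec x y); auto. right; split; [tauto| apply IHchi; tauto].
Qed.

Lemma free_sub_good : forall psi r, free_sub psi r -> good psi r.
Proof.
  intros psi r [chi [y [-> [Hf Hff]]]].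
  revert Hf Hff. induction chi; simpl; intros Hf Hff; try contradiction.
  - subst. rewrite Nat.eqb_refl. constructor.
  - destruct Hff. destruct Hf; [apply good_andl|apply good_andr]; auto.
  - destruct Hff. destruct Hf; [apply good_orl|apply good_orr]; auto.
  - constructor; auto.
  - constructor; auto.
  - destruct Hf as [Hne Hf]. destruct (Nat.eqb_spec x y); [congruence|].
    destruct Hff as [Heq|[Hn Hff]]; [congruence|]. constructor; auto.
  - destruct Hf as [Hne Hf]. destruct (Nat.eqb_spec x y); [congruence|].
    destruct Hff as [Heq|[Hn Hff]]; [congruence|]. constructor; auto.
Qed.

Fixpoint mv (f : form) : nat :=
  match f with
  | FVar x => x
  | FAnd a b | FOr a b => max (mv a) (mv b)
  | FDia a | FBox a => mv a
  | FMu x a | FNu x a => max x (mv a)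
  | _ => 0
  end.

Lemma mv_fresh : forall f y, mv f < y -> ~ free_in y f /\ ~ bound_in y f.
Proof.
  induction f; intros y H; simpl in *.
  all: try (split; intro; lia).
  all: try (specialize (IHf1 y ltac:(lia)); specialize (IHf2 y ltac:(lia)); tauto).
  all: try (specialize (IHf y ltac:(lia)); tauto).
  all: specialize (IHf y ltac:(lia)); split; [intros [A B]; tauto | intros [A|A]; [lia|tauto]].
Qed.

Lemma good_free_sub_aux : forall psi r, good psi r -> forall y, mv r < y ->
  exists chi, r = subst chi psi y /\ free_in y chi /\ free_for psi y chi.
Proof.
  intros psi r G. induction G; intros y Hy; simpl in Hy.
  - exists (FVar y); simpl; rewrite Nat.eqb_refl; auto.
  - destruct (IHG y ltac:(lia)) as [c [E [F1 F2]]].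
    destruct (mv_fresh b y ltac:(lia)) as [Nb _].
    exists (FAnd c b); simpl; rewrite (subst_notfree b) by auto; subst; repeat split; auto; try (left; auto; fail); try (right; auto; fail); apply free_for_notfree; auto.
  - destruct (IHG y ltac:(lia)) as [c [E [F1 F2]]].
    destruct (mv_fresh a y ltac:(lia)) as [Nb _].
    exists (FAnd a c); simpl; rewrite (subst_notfree a) by auto; subst; repeat split; auto; try (left; auto; fail); try (right; auto; fail); apply free_for_notfree; auto.
  - destruct (IHG y ltac:(lia)) as [c [E [F1 F2]]].
    destruct (mv_fresh b y ltac:(lia)) as [Nb _].
    exists (FOr c b); simpl; rewrite (subst_notfree b) by auto; subst; repeat split; auto; try (left; auto; fail); try (right; auto; fail); apply free_for_notfree; auto.
  - destruct (IHG y ltac:(lia)) as [c [E [F1 F2]]].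
    destruct (mv_fresh a y ltac:(lia)) as [Nb _].
    exists (FOr a c); simpl; rewrite (subst_notfree a) by auto; subst; repeat split; auto; try (left; auto; fail); try (right; auto; fail); apply free_for_notfree; auto.
  - destruct (IHG y ltac:(lia)) as [c [E [F1 F2]]].
    exists (FDia c); simpl; subst; auto.
  - destruct (IHG y ltac:(lia)) as [c [E [F1 F2]]].
    exists (FBox c); simpl; subst; auto.
  - destruct (IHG y ltac:(lia)) as [c [E [F1 F2]]].
    exists (FMu x c); simpl. destruct (Nat.eqb_spec x y); [lia|].
    subst; repeat split; auto; right; split; auto.
  - destruct (IHG y ltac:(lia)) as [c [E [F1 F2]]].
    exists (FNu x c); simpl. destruct (Nat.eqb_spec x y); [lia|].
    subst; repeat split; auto; right; split; auto.
Qed.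

Lemma good_free_sub : forall psi r, good psi r -> free_sub psi r.
Proof.
  intros psi r G. destruct (@good_free_sub_aux _ _ G (S (mv r)) ltac:(lia)) as [c H].
  exists c, (S (mv r)); auto.
Qed.

Lemma good_fv : forall b psi, good b psi -> forall v, free_in v b -> free_in v psi.
Proof.
  intros b psi G; induction G; intros v Hv; simpl; auto.
  - split; auto. intro; subst; auto.
  - split; auto. intro; subst; auto.
Qed.

Lemma good_trans : forall b psi r, good b psi -> good psi r -> good b r.
Proof.
  intros b psi r G1 G2; induction G2; [exact G1|..]; try (constructor; auto; fail).
  - constructor; auto. intro Hx; apply H; eapply good_fv; eauto.
  - constructor; auto. intro Hx; apply H; eapply good_fv; eauto.
Qed.

Lemma good_size : forall t r, good t r -> fsize t <= fsize r /\ (fsize t = fsize r -> t = r).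
Proof.
  intros t r G; induction G; simpl; split; intros; try lia; auto.
Qed.

Lemma sub_size : forall t r, sub t r -> fsize t <= fsize r /\ (fsize t = fsize r -> t = r).
Proof.
  intros t r G; induction G; simpl; split; intros; try lia; auto.
Qed.


Inductive goodn (t : form) : nat -> form -> Prop :=
| gn_refl : goodn t 0 t
| gn_andl n a b : goodn t n a -> goodn t (S n) (FAnd a b)
| gn_andr n a b : goodn t n b -> goodn t (S n) (FAnd a b)
| gn_orl n a b : goodn t n a -> goodn t (S n) (FOr a b)
| gn_orr n a b : goodn t n b -> goodn t (S n) (FOr a b)
| gn_dia n a : goodn t n a -> goodn t (S n) (FDia a)
| gn_box n a : goodn t n a -> goodn t (S n) (FBox a)
| gn_mu n x a : ~ free_in x t -> goodn t n a -> goodn t (S n) (FMu x a)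
| gn_nu n x a : ~ free_in x t -> goodn t n a -> goodn t (S n) (FNu x a).

Lemma good_goodn : forall t r, good t r -> exists n, goodn t n r.
Proof.
  intros t r G; induction G; [exists 0; constructor|..]; destruct IHG as [n Hn]; exists (S n); first [apply gn_andr; now auto | apply gn_orr; now auto | constructor; now auto].
Qed.

Lemma goodn_subst : forall t n a, goodn t n a -> forall u z, ~ free_in z t -> goodn t n (subst a u z).
Proof.
  intros t n a G; induction G; intros u z Hz; simpl.
  1: (rewrite subst_notfree by auto; constructor).
  all: try (first [apply gn_andr; now auto | apply gn_orr; now auto | constructor; now auto]).
  all: match goal with |- context[Nat.eqb ?x ?z] => destruct (Nat.eqb_spec x z) end; constructor; auto.
Qed.

Lemma goodn_steps : forall n t r, goodn t n r -> steps r t.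
Proof.
  induction n as [n IH] using lt_wf_ind. intros t r G.
  inversion G; subst.
  1: apply rt_refl.
  all: match goal with
  | H : goodn _ ?m ?a, Hx : ~ free_in ?x _ |- steps (FMu ?x ?a) ?t =>
      apply rt_trans with (subst a (FMu x a) x); [apply rt_step, st_mu|apply (IH m); [lia|apply goodn_subst; auto]]
  | H : goodn _ ?m ?a, Hx : ~ free_in ?x _ |- steps (FNu ?x ?a) ?t =>
      apply rt_trans with (subst a (FNu x a) x); [apply rt_step, st_nu|apply (IH m); [lia|apply goodn_subst; auto]]
  | H : goodn _ ?m ?a |- steps ?r ?t =>
      apply rt_trans with a; [apply rt_step; constructor|apply (IH m); [lia|auto]]
  end.
Qed.

Lemma good_steps : forall t r, good t r -> steps r t.
Proof. intros t r G; destruct (@good_goodn _ _ G) as [n Hn]; eapply goodn_steps; eauto. Qed.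

Lemma tr_in_steps : forall psi r s, tr_in psi r s -> steps r s.
Proof.
  intros psi r s H; induction H. apply rt_refl. eapply rt_trans; [apply rt_step|]; eauto.
Qed.

Lemma tr_in_first : forall psi r s, tr_in psi r s -> free_sub psi r.
Proof. intros psi r s H; destruct H; auto. Qed.
Lemma tr_in_last : forall psi r s, tr_in psi r s -> free_sub psi s.
Proof. intros psi r s H; induction H; auto. Qed.

Lemma tr_in_app : forall psi r s u, tr_in psi r s -> tr_in psi s u -> tr_in psi r u.
Proof. intros psi r s u H; induction H; intros; auto. econstructor; eauto. Qed.

Lemma tr_in_mono : forall psi phi r s, good phi psi -> tr_in psi r s -> tr_in phi r s.
Proof.
  intros psi phi r s G H; induction H.
  - constructor. apply good_free_sub; eapply good_trans; eauto. apply free_sub_good; auto.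
  - econstructor; eauto. apply good_free_sub; eapply good_trans; eauto. apply free_sub_good; auto.
Qed.

Lemma sqle_good : forall a b, sqle a b -> good b a.
Proof. intros a b (_&_&H). apply free_sub_good. eapply tr_in_last; eauto. Qed.

Lemma sqle_trans : forall a b c, sqle a b -> sqle b c -> sqle a c.
Proof.
  intros a b c H1 H2. pose proof (@sqle_good _ _ H2) as G.
  destruct H1 as (Fa&Fb&T1); destruct H2 as (_&Fc&T2). split; [|split]; auto.
  eapply tr_in_app; eauto. eapply tr_in_mono; eauto.
Qed.

Lemma sqle_antisym : forall a b, sqle a b -> sqle b a -> a = b.
Proof.
  intros a b H1 H2. apply sqle_good in H1; apply sqle_good in H2.
  apply good_size in H1; apply good_size in H2. symmetry; apply H1; lia.
Qed.

Lemma sqle_refl : forall a, is_fix a -> sqle a a.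
Proof. intros a Fa. split; [|split]; auto. constructor. apply good_free_sub; constructor. Qed.

Lemma sqle_steps : forall a b, sqle a b -> steps a b /\ steps b a.
Proof.
  intros a b H. split. apply good_steps, sqle_good; auto.
  destruct H as (_&_&H); eapply tr_in_steps; eauto.
Qed.

Lemma sqlt_size : forall a b, sqlt a b -> fsize b < fsize a.
Proof.
  intros a b [H1 H2]. pose proof (good_size _ _ (@sqle_good _ _ H1)) as [S1 S2].
  destruct (Nat.eq_dec (fsize b) (fsize a)). specialize (S2 e). subst. exfalso; apply H2; auto.
  lia.
Qed.


Ltac de := match goal with
  | H : context[Nat.eqb ?a ?b] |- _ => destruct (Nat.eqb_spec a b)
  | |- context[Nat.eqb ?a ?b] => destruct (Nat.eqb_spec a b)
  end.

Lemma bound_subst : forall b t x v, bound_in v (subst b t x) -> bound_in v b \/ bound_in v t.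
Proof.
  induction b; intros t y v H; simpl in *; repeat de; simpl in *; try tauto.
  all: try (destruct H as [H|H]; [destruct (IHb1 _ _ _ H)|destruct (IHb2 _ _ _ H)]; tauto).
  all: try (apply IHb in H; tauto).
  all: destruct H as [H|H]; [tauto|destruct (IHb _ _ _ H); tauto].
Qed.

Lemma free_subst : forall b t x v, free_in v (subst b t x) -> (free_in v b /\ v <> x) \/ free_in v t.
Proof.
  induction b; intros t y v H; simpl in *; repeat de; simpl in *; subst; try tauto.
  all: try (destruct H as [H|H]; [destruct (IHb1 _ _ _ H)|destruct (IHb2 _ _ _ H)]; tauto).
  all: try (left; split; [tauto|intro; subst; tauto]).
  all: try (apply IHb in H; tauto).
  all: destruct H as [H1 H]; destruct (IHb _ _ _ H); tauto.
Qed.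

Lemma step_bound : forall g h, step g h -> forall v, bound_in v h -> bound_in v g.
Proof.
  intros g h S v H; destruct S; simpl; auto;
  destruct (bound_subst _ _ _ _ H); simpl in *; tauto.
Qed.

Lemma step_free : forall g h, step g h -> forall v, free_in v h -> free_in v g.
Proof.
  intros g h S v H; destruct S; simpl; auto;
  destruct (free_subst _ _ _ _ H) as [[A B]|A]; simpl in *; try tauto; split; auto.
Qed.

Lemma steps_bound : forall g h, steps g h -> forall v, bound_in v h -> bound_in v g.
Proof. intros g h S; induction S; eauto using step_bound. Qed.
Lemma steps_free : forall g h, steps g h -> forall v, free_in v h -> free_in v g.
Proof. intros g h S; induction S; eauto using step_free. Qed.

Lemma var_subst : forall b t x y, ~ bound_in y b -> ~ free_in y b ->
  subst (subst b (FVar y) x) t y = subst b t x.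
Proof.
  induction b; intros t z y Hb Hf; simpl in *; auto.
  - destruct (Nat.eqb_spec x z); simpl. rewrite Nat.eqb_refl; auto.
    destruct (Nat.eqb_spec x y); [subst; tauto|auto].
  - rewrite IHb1, IHb2; tauto.
  - rewrite IHb1, IHb2; tauto.
  - rewrite IHb; tauto.
  - rewrite IHb; tauto.
  - destruct (Nat.eqb_spec x z); simpl; destruct (Nat.eqb_spec x y); try (subst; tauto).
    + subst. rewrite subst_notfree; auto.
    + rewrite IHb; auto.
  - destruct (Nat.eqb_spec x z); simpl; destruct (Nat.eqb_spec x y); try (subst; tauto).
    + subst. rewrite subst_notfree; auto.
    + rewrite IHb; auto.
Qed.

Lemma subst_comm : forall g c f z y, ~ bound_in y g -> ~ free_in z f -> z <> y ->
  subst (subst g c z) f y = subst (subst g f y) (subst c f y) z.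
Proof.
  induction g; intros c f z y Hb Hf Hzy; simpl in *; repeat (de; simpl in *); subst;
  try congruence; try tauto.
  all: try (rewrite subst_notfree; auto; fail).
  all: try (rewrite IHg1, IHg2 by tauto; auto; fail).
  all: try (rewrite IHg by tauto; auto; fail).
Qed.

Lemma fsize_var_subst : forall b x y, fsize (subst b (FVar y) x) = fsize b.
Proof.
  induction b; intros z y; simpl; auto.
  destruct (Nat.eqb x z); auto.
  destruct (Nat.eqb x z); simpl; auto.
  destruct (Nat.eqb x z); simpl; auto.
Qed.


Lemma steps_inv : forall f g, steps f g -> g = f \/ exists h, step f h /\ steps h g.
Proof.
  intros f g H. apply clos_rt_rt1n in H. destruct H; auto.
  right; exists y; split; auto. apply clos_rt1n_rt; auto.
Qed.

Lemma closed_steps : forall (P : form -> Prop), (forall g h, P g -> step g h -> P h) ->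
  forall g h, steps g h -> P g -> P h.
Proof. intros P HP g h S; induction S; eauto. Qed.

Lemma tidy_and : forall a b, tidy (FAnd a b) -> tidy a /\ tidy b.
Proof. unfold tidy; simpl; split; intros x [H1 H2]; apply (H x); tauto. Qed.
Lemma tidy_or : forall a b, tidy (FOr a b) -> tidy a /\ tidy b.
Proof. unfold tidy; simpl; split; intros x [H1 H2]; apply (H x); tauto. Qed.
Lemma tidy_dia : forall a, tidy (FDia a) -> tidy a.
Proof. unfold tidy; simpl; auto. Qed.
Lemma tidy_box : forall a, tidy (FBox a) -> tidy a.
Proof. unfold tidy; simpl; auto. Qed.

Lemma atom_steps : forall f g, steps f g -> (forall h, ~ step f h) -> g = f.
Proof. intros f g S N. destruct (steps_inv _ _ S) as [|[h [H _]]]; auto. exfalso; eapply N; eauto. Qed.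

Lemma mu_case : forall x b, tidy (FMu x b) ->
  (forall b', fsize b' = fsize b -> tidy b' -> exists L, forall g, steps b' g -> In g L) ->
  exists L, forall g, steps (FMu x b) g -> In g L.
Proof.
  intros x b T IH. set (f := FMu x b). set (y := S (mv f)).
  destruct (mv_fresh f y ltac:(unfold y; lia)) as [Fy By].
  assert (Fyb : ~ free_in y b).
  { intro HH; apply Fy. unfold f; simpl. split; auto. intro E. assert (x <= mv f) by (unfold f; simpl; lia). unfold y in E. lia. }
  assert (Byb : ~ bound_in y b) by (intro; apply By; unfold f; simpl; auto).
  set (b' := subst b (FVar y) x).
  assert (BB : forall v, bound_in v b' -> bound_in v b).
  { intros v Hv. destruct (bound_subst _ _ _ _ Hv); simpl in *; tauto. }
  assert (Tb' : tidy b').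
  { intros v [H1 H2]. apply BB in H2. destruct (free_subst _ _ _ _ H1) as [[H3 H4]|H3].
    - apply (T v); simpl; split; [split; [intro; subst; auto|auto]|auto].
    - simpl in H3; subst; auto. }
  destruct (IH b' (fsize_var_subst _ _ _) Tb') as [L HL].
  exists (f :: map (fun c => subst c f y) L).
  set (Inv := fun g => g = f \/ exists c, steps b' c /\ g = subst c f y).
  assert (Hf : forall h, step f h -> Inv h).
  { intros h S. inversion S; subst. right. exists b'. split; [apply rt_refl|].
    unfold b'. rewrite var_subst; auto. }
  assert (Cl : forall g h, Inv g -> step g h -> Inv h).
  { intros g h [->|[c [Sc ->]]] S; [auto|].
    destruct c; simpl in S.
    all: try (inversion S; fail).
    - destruct (Nat.eqb_spec x0 y); [subst; auto|inversion S].
    - inversion S; subst; right; eexists; (split; [|reflexivity]);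
        eapply rt_trans; eauto; apply rt_step; constructor.
    - inversion S; subst; right; eexists; (split; [|reflexivity]);
        eapply rt_trans; eauto; apply rt_step; constructor.
    - inversion S; subst; right; eexists; (split; [|reflexivity]);
        eapply rt_trans; eauto; apply rt_step; constructor.
    - inversion S; subst; right; eexists; (split; [|reflexivity]);
        eapply rt_trans; eauto; apply rt_step; constructor.
    - assert (Bz : bound_in x0 b) by (apply BB; eapply steps_bound; eauto; simpl; auto).
      assert (Hzy : x0 <> y) by (intro; subst; auto).
      rewrite (proj2 (Nat.eqb_neq x0 y) Hzy) in S.
      inversion S; subst. right. exists (subst c (FMu x0 c) x0). split.
      + eapply rt_trans; eauto. apply rt_step; constructor.
      + symmetry. assert (E: subst (FMu x0 c) f y = FMu x0 (subst c f y)) by (simpl; rewrite (proj2 (Nat.eqb_neq _ _) Hzy); auto). rewrite <- E.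
        apply subst_comm; auto.
        * intro Hc; apply Byb, BB. eapply steps_bound; eauto. simpl; auto.
        * intro Hc. apply (T x0). split; auto. unfold f; simpl; auto.
    - assert (Bz : bound_in x0 b) by (apply BB; eapply steps_bound; eauto; simpl; auto).
      assert (Hzy : x0 <> y) by (intro; subst; auto).
      rewrite (proj2 (Nat.eqb_neq x0 y) Hzy) in S.
      inversion S; subst. right. exists (subst c (FNu x0 c) x0). split.
      + eapply rt_trans; eauto. apply rt_step; constructor.
      + symmetry. assert (E: subst (FNu x0 c) f y = FNu x0 (subst c f y)) by (simpl; rewrite (proj2 (Nat.eqb_neq _ _) Hzy); auto). rewrite <- E.
        apply subst_comm; auto.
        * intro Hc; apply Byb, BB. eapply steps_bound; eauto. simpl; auto.
        * intro Hc. apply (T x0). split; auto. unfold f; simpl; auto. }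
  intros g Sg. assert (Inv g) by (eapply closed_steps; eauto; left; auto).
  destruct H as [->|[c [Sc ->]]]; [left; auto|right]. apply (in_map (fun c => subst c f y)); auto.
Qed.

Lemma nu_case : forall x b, tidy (FNu x b) ->
  (forall b', fsize b' = fsize b -> tidy b' -> exists L, forall g, steps b' g -> In g L) ->
  exists L, forall g, steps (FNu x b) g -> In g L.
Proof.
  intros x b T IH. set (f := FNu x b). set (y := S (mv f)).
  destruct (mv_fresh f y ltac:(unfold y; lia)) as [Fy By].
  assert (Fyb : ~ free_in y b).
  { intro HH; apply Fy. unfold f; simpl. split; auto. intro E. assert (x <= mv f) by (unfold f; simpl; lia). unfold y in E. lia. }
  assert (Byb : ~ bound_in y b) by (intro; apply By; unfold f; simpl; auto).
  set (b' := subst b (FVar y) x).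
  assert (BB : forall v, bound_in v b' -> bound_in v b).
  { intros v Hv. destruct (bound_subst _ _ _ _ Hv); simpl in *; tauto. }
  assert (Tb' : tidy b').
  { intros v [H1 H2]. apply BB in H2. destruct (free_subst _ _ _ _ H1) as [[H3 H4]|H3].
    - apply (T v); simpl; split; [split; [intro; subst; auto|auto]|auto].
    - simpl in H3; subst; auto. }
  destruct (IH b' (fsize_var_subst _ _ _) Tb') as [L HL].
  exists (f :: map (fun c => subst c f y) L).
  set (Inv := fun g => g = f \/ exists c, steps b' c /\ g = subst c f y).
  assert (Hf : forall h, step f h -> Inv h).
  { intros h S. inversion S; subst. right. exists b'. split; [apply rt_refl|].
    unfold b'. rewrite var_subst; auto. }
  assert (Cl : forall g h, Inv g -> step g h -> Inv h).
  { intros g h [->|[c [Sc ->]]] S; [auto|].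
    destruct c; simpl in S.
    all: try (inversion S; fail).
    - destruct (Nat.eqb_spec x0 y); [subst; auto|inversion S].
    - inversion S; subst; right; eexists; (split; [|reflexivity]);
        eapply rt_trans; eauto; apply rt_step; constructor.
    - inversion S; subst; right; eexists; (split; [|reflexivity]);
        eapply rt_trans; eauto; apply rt_step; constructor.
    - inversion S; subst; right; eexists; (split; [|reflexivity]);
        eapply rt_trans; eauto; apply rt_step; constructor.
    - inversion S; subst; right; eexists; (split; [|reflexivity]);
        eapply rt_trans; eauto; apply rt_step; constructor.
    - assert (Bz : bound_in x0 b) by (apply BB; eapply steps_bound; eauto; simpl; auto).
      assert (Hzy : x0 <> y) by (intro; subst; auto).
      rewrite (proj2 (Nat.eqb_neq x0 y) Hzy) in S.
      inversion S; subst. right. exists (subst c (FMu x0 c) x0). split.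
      + eapply rt_trans; eauto. apply rt_step; constructor.
      + symmetry. assert (E: subst (FMu x0 c) f y = FMu x0 (subst c f y)) by (simpl; rewrite (proj2 (Nat.eqb_neq _ _) Hzy); auto). rewrite <- E.
        apply subst_comm; auto.
        * intro Hc; apply Byb, BB. eapply steps_bound; eauto. simpl; auto.
        * intro Hc. apply (T x0). split; auto. unfold f; simpl; auto.
    - assert (Bz : bound_in x0 b) by (apply BB; eapply steps_bound; eauto; simpl; auto).
      assert (Hzy : x0 <> y) by (intro; subst; auto).
      rewrite (proj2 (Nat.eqb_neq x0 y) Hzy) in S.
      inversion S; subst. right. exists (subst c (FNu x0 c) x0). split.
      + eapply rt_trans; eauto. apply rt_step; constructor.
      + symmetry. assert (E: subst (FNu x0 c) f y = FNu x0 (subst c f y)) by (simpl; rewrite (proj2 (Nat.eqb_neq _ _) Hzy); auto). rewrite <- E.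
        apply subst_comm; auto.
        * intro Hc; apply Byb, BB. eapply steps_bound; eauto. simpl; auto.
        * intro Hc. apply (T x0). split; auto. unfold f; simpl; auto. }
  intros g Sg. assert (Inv g) by (eapply closed_steps; eauto; left; auto).
  destruct H as [->|[c [Sc ->]]]; [left; auto|right]. apply (in_map (fun c => subst c f y)); auto.
Qed.

Lemma clos_finite : forall n f, fsize f <= n -> tidy f -> exists L, forall g, steps f g -> In g L.
Proof.
  induction n; intros f Hs T.
  - destruct f; simpl in Hs; lia.
  - destruct f.
    all: try (exists [f]; intros g Sg; left; symmetry; apply atom_steps; auto; intros h Hh; inversion Hh; fail).
    all: try (exists [FTop]; intros g Sg; left; symmetry; apply atom_steps; auto; intros h Hh; inversion Hh; fail).
    all: try (exists [FBot]; intros g Sg; left; symmetry; apply atom_steps; auto; intros h Hh; inversion Hh; fail).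
    all: try (exists [FProp p]; intros g Sg; left; symmetry; apply atom_steps; auto; intros h Hh; inversion Hh; fail).
    all: try (exists [FNProp p]; intros g Sg; left; symmetry; apply atom_steps; auto; intros h Hh; inversion Hh; fail).
    all: try (exists [FVar x]; intros g Sg; left; symmetry; apply atom_steps; auto; intros h Hh; inversion Hh; fail).
    + destruct (tidy_and _ _ T) as [T1 T2]; simpl in Hs.
      destruct (IHn f1 ltac:(lia) T1) as [L1 H1]; destruct (IHn f2 ltac:(lia) T2) as [L2 H2].
      exists (FAnd f1 f2 :: L1 ++ L2). intros g Sg. destruct (steps_inv _ _ Sg) as [->|[h [Sh Sh']]]; [left; auto|right].
      inversion Sh; subst; apply in_or_app; auto.
    + destruct (tidy_or _ _ T) as [T1 T2]; simpl in Hs.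
      destruct (IHn f1 ltac:(lia) T1) as [L1 H1]; destruct (IHn f2 ltac:(lia) T2) as [L2 H2].
      exists (FOr f1 f2 :: L1 ++ L2). intros g Sg. destruct (steps_inv _ _ Sg) as [->|[h [Sh Sh']]]; [left; auto|right].
      inversion Sh; subst; apply in_or_app; auto.
    + simpl in Hs. destruct (IHn f ltac:(lia) (tidy_dia _ T)) as [L1 H1].
      exists (FDia f :: L1). intros g Sg. destruct (steps_inv _ _ Sg) as [->|[h [Sh Sh']]]; [left; auto|right].
      inversion Sh; subst; auto.
    + simpl in Hs. destruct (IHn f ltac:(lia) (tidy_box _ T)) as [L1 H1].
      exists (FBox f :: L1). intros g Sg. destruct (steps_inv _ _ Sg) as [->|[h [Sh Sh']]]; [left; auto|right].
      inversion Sh; subst; auto.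
    + simpl in Hs. apply mu_case; auto. intros b' E Tb'. apply IHn; auto; lia.
    + simpl in Hs. apply nu_case; auto. intros b' E Tb'. apply IHn; auto; lia.
Qed.



Lemma sub_trans : forall a b c, sub a b -> sub b c -> sub a c.
Proof.
  intros a b c H1 H2; induction H2; auto.
  all: first [apply sub_andr; now auto | apply sub_orr; now auto | constructor; now auto].
Qed.

Lemma sub_free_subst : forall g u x, free_in x g -> sub u (subst g u x).
Proof.
  induction g; intros u y H; simpl in *; try contradiction.
  - subst. rewrite Nat.eqb_refl. constructor.
  - destruct H; [apply sub_andl|apply sub_andr]; auto.
  - destruct H; [apply sub_orl|apply sub_orr]; auto.
  - constructor; auto.
  - constructor; auto.
  - destruct H. destruct (Nat.eqb_spec x y); [congruence|]. constructor; auto.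
  - destruct H. destruct (Nat.eqb_spec x y); [congruence|]. constructor; auto.
Qed.

Lemma whole_case : forall b u x,
  sub (subst b u x) u \/ sub (subst b u x) b \/ exists g, subst b u x = subst g u x /\ free_in x g.
Proof.
  intros b u x. destruct (classic (free_in x b)) as [F|NF].
  - right; right; exists b; auto.
  - right; left. rewrite subst_notfree; auto. constructor.
Qed.

Ltac lift_sub := match goal with
  | H : sub ?t ?u \/ sub ?t ?b \/ _ |- _ =>
     destruct H as [?|[?|?]]; [left; auto| right; left; first [apply sub_andr; now auto | apply sub_orr; now auto | constructor; now auto] | right; right; auto]
  end.

Lemma subterm_subst : forall b t u x, sub t (subst b u x) ->
  sub t u \/ sub t b \/ exists g, t = subst g u x /\ free_in x g.
Proof.
  induction b; intros t u y H.
  all: try (inversion H; subst; right; left; constructor; fail).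
  - simpl in H. destruct (Nat.eqb_spec x y); subst; auto; try (inversion H; subst; right; left; constructor).
  - inversion H; subst.
    + apply (whole_case (FAnd b1 b2)).
    + specialize (IHb1 _ _ _ H1); lift_sub.
    + specialize (IHb2 _ _ _ H1); lift_sub.
  - inversion H; subst.
    + apply (whole_case (FOr b1 b2)).
    + specialize (IHb1 _ _ _ H1); lift_sub.
    + specialize (IHb2 _ _ _ H1); lift_sub.
  - inversion H; subst.
    + apply (whole_case (FDia b)).
    + specialize (IHb _ _ _ H1); lift_sub.
  - inversion H; subst.
    + apply (whole_case (FBox b)).
    + specialize (IHb _ _ _ H1); lift_sub.
  - simpl in H. destruct (Nat.eqb_spec x y).
    + right; left; auto.
    + inversion H; subst.
      * pose proof (whole_case (FMu x b) u y) as W. simpl in W. rewrite (proj2 (Nat.eqb_neq _ _) n) in W. exact W.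
      * specialize (IHb _ _ _ H1); lift_sub.
  - simpl in H. destruct (Nat.eqb_spec x y).
    + right; left; auto.
    + inversion H; subst.
      * pose proof (whole_case (FNu x b) u y) as W. simpl in W. rewrite (proj2 (Nat.eqb_neq _ _) n) in W. exact W.
      * specialize (IHb _ _ _ H1); lift_sub.
Qed.

Lemma step_back : forall r s t, step r s -> sub t s -> sub t r \/ (sub r t /\ is_fix r).
Proof.
  intros r s t S H. destruct S.
  all: try (left; eapply sub_trans; [exact H|]; first [apply sub_andr; constructor | apply sub_orr; constructor | constructor; constructor]; fail).
  - destruct (subterm_subst _ _ _ _ H) as [?|[?|[g [-> F]]]]; [left; auto|left; constructor; auto|].
    right; split; [apply sub_free_subst; auto| exists MuT; reflexivity].
  - destruct (subterm_subst _ _ _ _ H) as [?|[?|[g [-> F]]]]; [left; auto|left; constructor; auto|].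
    right; split; [apply sub_free_subst; auto| exists NuT; reflexivity].
Qed.

Lemma min_exists : forall (P : form -> Prop) (m : form -> nat), (exists a, P a) ->
  exists a, P a /\ forall b, P b -> m a <= m b.
Proof.
  intros P m [a Ha].
  assert (forall n a, m a = n -> P a -> exists a, P a /\ forall b, P b -> m a <= m b).
  { induction n as [n IH] using lt_wf_ind. intros a0 E Pa.
    destruct (classic (exists b, P b /\ m b < m a0)) as [[b [Pb Lb]]|N].
    - eapply (IH (m b)); eauto; lia.
    - exists a0; split; auto. intros b Pb. destruct (Nat.le_gt_cases (m a0) (m b)); auto.
      exfalso; apply N; eauto. }
  eapply H; eauto.
Qed.

Lemma sub_good : forall t r, sub t r -> (forall v, free_in v t -> ~ bound_in v r) -> good t r.
Proof.
  intros t r S; induction S; intros H.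
  - constructor.
  - apply good_andl; apply IHS; intros v Hv Hb; apply (H v Hv); simpl; auto.
  - apply good_andr; apply IHS; intros v Hv Hb; apply (H v Hv); simpl; auto.
  - apply good_orl; apply IHS; intros v Hv Hb; apply (H v Hv); simpl; auto.
  - apply good_orr; apply IHS; intros v Hv Hb; apply (H v Hv); simpl; auto.
  - apply good_dia; apply IHS; intros v Hv Hb; apply (H v Hv); simpl; auto.
  - apply good_box; apply IHS; intros v Hv Hb; apply (H v Hv); simpl; auto.
  - apply good_mu; [intro Hx; apply (H x Hx); simpl; auto|]; apply IHS; intros v Hv Hb; apply (H v Hv); simpl; auto.
  - apply good_nu; [intro Hx; apply (H x Hx); simpl; auto|]; apply IHS; intros v Hv Hb; apply (H v Hv); simpl; auto.
Qed.

Section Top.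
Variable phi : form.
Definition inC (f : form) := steps phi f /\ steps f phi.

Lemma top_sub : forall T, inC T -> is_fix T -> (forall a, inC a -> is_fix a -> fsize T <= fsize a) ->
  forall r, inC r -> sub T r.
Proof.
  intros T CT FT MT r Cr.
  assert (R : steps r T) by (eapply rt_trans; [apply Cr|apply CT]).
  assert (R' : steps T r) by (eapply rt_trans; [apply CT|apply Cr]).
  clear Cr. apply clos_rt_rt1n in R. remember T as T0 eqn:ET.
  induction R as [|r r' s S R IH]; [subst; constructor|]. subst s.
  assert (Hr' : sub T r').
  { apply IH; auto. eapply rt_trans; [exact R'|apply rt_step; auto]. }
  destruct (step_back _ _ _ S Hr') as [?|[Sr Fr]]; auto.
  assert (Cr : inC r).
  { split. eapply rt_trans; [apply CT|exact R'].
    eapply rt_trans; [apply rt_step; exact S|]. eapply rt_trans; [apply clos_rt1n_rt; exact R|apply CT]. }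
  specialize (MT r Cr Fr). destruct (sub_size _ _ Sr) as [L E].
  rewrite (E ltac:(lia)). constructor.
Qed.

Lemma top_good : forall T, inC T -> is_fix T -> (forall a, inC a -> is_fix a -> fsize T <= fsize a) ->
  (forall f, inC f -> tidy f) -> forall r, inC r -> good T r.
Proof.
  intros T CT FT MT Td r Cr. apply sub_good. apply top_sub; auto.
  intros v Hv Hb. apply (Td r Cr v). split; auto.
  eapply steps_free; [|exact Hv]. eapply rt_trans; [apply Cr|apply CT].
Qed.

Lemma top_sqle : forall T, inC T -> is_fix T -> (forall a, inC a -> is_fix a -> fsize T <= fsize a) ->
  (forall f, inC f -> tidy f) -> forall a, inC a -> is_fix a -> sqle a T.
Proof.
  intros T CT FT MT Td a Ca Fa. split; [|split]; auto.
  assert (R : steps T a) by (eapply rt_trans; [apply CT|apply Ca]).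
  assert (G : forall s, clos_refl_trans_1n form step s a -> inC s -> inC a -> tr_in T s a).
  { intros s R0; induction R0 as [s|s s' u S R0 IH]; intros Cs Cu.
    - constructor. apply good_free_sub. apply top_good; auto.
    - econstructor; [apply good_free_sub; apply top_good; auto| exact S|].
      apply IH; auto. split. eapply rt_trans; [apply Cs|apply rt_step; auto].
      eapply rt_trans; [apply clos_rt1n_rt; exact R0|apply Cu]. }
  apply G; auto. apply clos_rt_rt1n; auto.
Qed.
End Top.


Definition adj (e : fp) (d : Z) : Z :=
  match e with MuT => if Z.odd d then d else (d + 1)%Z | NuT => if Z.odd d then (d + 1)%Z else d end.

Lemma Omega_eq : forall f e, ftype f = Some e ->
  Omega_g f = Some (adj e (Z.of_nat (cd (cluster f)) - Z.of_nat (h_up f))).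
Proof. intros f e H. unfold Omega_g. rewrite H. destruct e; reflexivity. Qed.

Lemma odd_dec : forall d, exists q, (d = 2*q /\ Z.odd d = false)%Z \/ (d = 2*q+1 /\ Z.odd d = true)%Z.
Proof.
  intros d. exists (Z.div2 d). pose proof (Zdiv2_odd_eqn d). destruct (Z.odd d); [right|left]; split; auto; lia.
Qed.

Lemma odd_succ : forall d, Z.odd (d + 1) = negb (Z.odd d).
Proof. intros d. rewrite Z.add_1_r, Z.odd_succ, <- Z.negb_odd. reflexivity. Qed.

Ltac adj_tac := unfold adj in *;
  repeat match goal with
  | d : Z |- _ => match goal with
                  | H : Z.odd d = _ |- _ => fail 1
                  | _ => let q := fresh "q" in let E := fresh "E" in let O := fresh "O" in
                         destruct (odd_dec d) as [q [[E O]|[E O]]]; rewrite ?O in *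
                  end
  end.

Lemma adj_parity : forall e d, has_parity e (adj e d).
Proof.
  intros e d. destruct (odd_dec d) as [q [[E O]|[E O]]]; destruct e; simpl; rewrite O; auto;
  rewrite odd_succ, O; auto.
Qed.

Lemma adj_bounds : forall e d, (d <= adj e d <= d + 1)%Z.
Proof. intros e d; destruct e; simpl; destruct (Z.odd d); lia. Qed.

Lemma adj_mono : forall e d1 d2, (d1 <= d2)%Z -> (adj e d1 <= adj e d2)%Z.
Proof.
  intros e d1 d2 H. destruct (odd_dec d1) as [q1 [[E1 O1]|[E1 O1]]];
  destruct (odd_dec d2) as [q2 [[E2 O2]|[E2 O2]]]; destruct e; simpl; rewrite O1, O2; lia.
Qed.

Lemma adj_strict : forall e e' d1 d2, e <> e' -> (d1 < d2)%Z -> (adj e d1 < adj e' d2)%Z.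
Proof.
  intros e e' d1 d2 Hn H. destruct (odd_dec d1) as [q1 [[E1 O1]|[E1 O1]]];
  destruct (odd_dec d2) as [q2 [[E2 O2]|[E2 O2]]]; destruct e, e'; try congruence; simpl; rewrite O1, O2; lia.
Qed.

Lemma adj_par_eq : forall e d, has_parity e d -> adj e d = d.
Proof. intros e d H; destruct e; simpl in *; rewrite H; auto. Qed.

Lemma iter_bar : forall i e, Nat.iter i fp_bar e = if Z.odd (Z.of_nat i) then fp_bar e else e.
Proof.
  induction i; intros e; [reflexivity|].
  change (Nat.iter (S i) fp_bar e) with (fp_bar (Nat.iter i fp_bar e)).
  rewrite IHi. rewrite Nat2Z.inj_succ, Z.odd_succ, <- Z.negb_odd.
  destruct (Z.odd (Z.of_nat i)); destruct e; reflexivity.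
Qed.

Lemma adj_iter : forall i e, adj (Nat.iter i fp_bar e) (Z.of_nat i) =
  (match e with NuT => 0 | MuT => 1 end + Z.of_nat i)%Z.
Proof.
  intros i e. rewrite iter_bar. destruct (Z.odd (Z.of_nat i)) eqn:O; destruct e; unfold adj, fp_bar; rewrite O; lia.
Qed.

Lemma iter_inj : forall i e e', Nat.iter i fp_bar e = Nat.iter i fp_bar e' -> e = e'.
Proof.
  intros i e e' H. rewrite !iter_bar in H. destruct (Z.odd (Z.of_nat i)); destruct e, e'; simpl in *; congruence.
Qed.

Lemma maxnat_spec : forall (P : nat -> Prop) B, (exists n, P n) -> (forall n, P n -> n <= B) ->
  P (maxnat P) /\ forall m, P m -> m <= maxnat P.
Proof.
  intros P B [n Pn] HB.
  assert (Ex : exists n, P n /\ forall m, P m -> m <= n).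
  { assert (forall k n, B - n = k -> P n -> exists n, P n /\ forall m, P m -> m <= n).
    { induction k as [k IH] using lt_wf_ind. intros n0 E P0.
      destruct (classic (exists m, P m /\ n0 < m)) as [[m [Pm Lm]]|N].
      - apply (IH (B - m)) with m; auto. pose proof (HB m Pm). pose proof (HB n0 P0). lia.
      - exists n0; split; auto. intros m Pm. destruct (Nat.le_gt_cases m n0); auto.
        exfalso; apply N; eauto. }
    eapply H; eauto. }
  unfold maxnat. apply (epsilon_spec (inhabits 0) (fun n => P n /\ forall m, P m -> m <= n)). auto.
Qed.

Lemma maxnat_eq : forall (P : nat -> Prop) n, P n -> (forall m, P m -> m <= n) -> maxnat P = n.
Proof.
  intros P n Pn H. destruct (maxnat_spec P n) as [A B]; eauto.
  specialize (H _ A). specialize (B _ Pn). lia.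
Qed.

Lemma alt_chain_tail : forall a l, alt_chain (a :: l) -> alt_chain l.
Proof. intros a l H; destruct l; simpl in *; tauto. Qed.

Lemma alt_chain_head : forall a l, alt_chain (a :: l) -> tidy_fix a.
Proof. intros a l H; destruct l; simpl in *; tauto. Qed.

Lemma chain_sizes : forall l a, alt_chain (a :: l) -> Forall (fun b => fsize b < fsize a) l.
Proof.
  induction l as [|b l IH]; intros a H; constructor.
  - destruct H as (_&H&_). apply sqlt_size; auto.
  - destruct H as (_&H1&_&H2). specialize (IH b H2). apply sqlt_size in H1.
    eapply Forall_impl; [|exact IH]. simpl; intros; lia.
Qed.

Lemma chain_len : forall l a, alt_chain (a :: l) -> length (a :: l) <= fsize a.
Proof.
  induction l as [|b l IH]; intros a H; simpl.
  - destruct a; simpl; lia.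
  - destruct H as (_&H1&_&H2). specialize (IH b H2). apply sqlt_size in H1. simpl in IH. lia.
Qed.

Lemma chain_nodup : forall l, alt_chain l -> NoDup l.
Proof.
  induction l as [|a l IH]; intros H; constructor.
  - intro Hin. pose proof (chain_sizes _ _ H) as F. rewrite Forall_forall in F.
    specialize (F a Hin). lia.
  - apply IH. eapply alt_chain_tail; eauto.
Qed.

Lemma chain_cluster : forall phi l a, alt_chain (a :: l) -> cluster phi a -> Forall (cluster phi) l.
Proof.
  intros phi; induction l as [|b l IH]; intros a H Ca; constructor.
  - destruct H as (_&[H _]&_). destruct (sqle_steps _ _ H) as [S1 S2].
    split; eapply rt_trans; [apply Ca|exact S1|exact S2|apply Ca].
  - destruct H as (_&[H1 _]&_&H2). apply (IH b H2).
    destruct (sqle_steps _ _ H1) as [S1 S2]. split; eapply rt_trans; [apply Ca|exact S1|exact S2|apply Ca].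
Qed.

Lemma chain_app : forall pre a suf, alt_chain (pre ++ [a]) -> alt_chain (a :: suf) -> alt_chain (pre ++ a :: suf).
Proof.
  induction pre as [|x pre IH]; intros a suf H1 H2; simpl in *; auto.
  destruct pre as [|y pre]; simpl in *.
  - destruct H1 as (T&H&Ht&_). split; [exact T| split; [exact H| split; [exact Ht| exact H2]]].
  - destruct H1 as (T&H&Ht&H1). split; [exact T| split;[exact H|split;[exact Ht| apply (IH a suf H1 H2)]]].
Qed.

Lemma chain_split : forall pre a suf, alt_chain (pre ++ a :: suf) -> alt_chain (pre ++ [a]) /\ alt_chain (a :: suf).
Proof.
  induction pre as [|x pre IH]; intros a suf H; simpl in *.
  - split; auto. split; [eapply alt_chain_head; eauto|auto].
  - destruct pre as [|y pre]; simpl in *.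
    + destruct H as (T&H&Ht&H1). split; [|auto]. split; [exact T| split; [exact H| split; [exact Ht| split; [eapply alt_chain_head; eauto|exact I]]]].
    + destruct H as (T&H&Ht&H1). destruct (IH _ _ H1) as [A B]. split; [|exact B]. split; [exact T| split; [exact H| split; [exact Ht| exact A]]].
Qed.

Lemma chain_types : forall pre a suf e, alt_chain (pre ++ a :: suf) -> ftype (hd a pre) = Some e ->
  ftype a = Some (Nat.iter (length pre) fp_bar e).
Proof.
  induction pre as [|x pre IH]; intros a suf e H He; simpl in *; auto.
  destruct pre as [|y pre]; simpl in *.
  - destruct H as (_&_&Ht&_). auto.
  - destruct H as (_&_&Ht&H1). rewrite (IH a suf (fp_bar e) H1 (Ht e He)).
    rewrite <- Nat.iter_succ_r. reflexivity.
Qed.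


Definition P_up (xi : form) := fun n => exists l, alt_chain (xi :: l) /\ length (xi :: l) = n.

Lemma h_up_spec : forall xi, tidy_fix xi -> P_up xi (h_up xi) /\ forall m, P_up xi m -> m <= h_up xi.
Proof.
  intros xi T. apply (maxnat_spec (P_up xi) (fsize xi)).
  - exists 1, []. simpl; auto.
  - intros n [l [H <-]]. apply chain_len; auto.
Qed.

Lemma h_up_ge1 : forall xi, tidy_fix xi -> 1 <= h_up xi.
Proof.
  intros xi T. destruct (h_up_spec xi T) as [_ H]. apply H. exists []. simpl; auto.
Qed.

Lemma cluster_eq : forall phi c, cluster phi c -> cluster c = cluster phi.
Proof.
  intros phi c [S1 S2]. apply functional_extensionality; intros g.
  apply propositional_extensionality. unfold cluster, equivC. split; intros [A B]; split.
  - eapply rt_trans; eauto.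
  - eapply rt_trans; eauto.
  - eapply rt_trans; eauto.
  - eapply rt_trans; eauto.
Qed.

Lemma fix_type : forall f, is_fix f -> exists e, ftype f = Some e.
Proof. auto. Qed.

Lemma other_type : forall e e', e <> e' -> e' = fp_bar e.
Proof. intros [] [] H; simpl; congruence. Qed.

Lemma part1 : forall xi e, tidy xi -> ftype xi = Some e ->
     exists k, Omega_g xi = Some k /\ has_parity e k.
Proof.
  intros xi e T H. eexists; split; [apply Omega_eq; eauto|]. apply adj_parity.
Qed.

Lemma part2 : forall phi psi, tidy_fix phi -> tidy_fix psi -> sqle phi psi ->
     exists a b, Omega_g phi = Some a /\ Omega_g psi = Some b /\
       (a <= b)%Z /\ (ftype phi <> ftype psi -> (a < b)%Z).
Proof.
  intros phi psi Tphi Tpsi H.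
  destruct (proj2 Tphi) as [e1 E1]. destruct (proj2 Tpsi) as [e2 E2].
  assert (Cl : cluster phi = cluster psi).
  { apply cluster_eq. destruct (sqle_steps _ _ H) as [S1 S2]. split; auto. }
  rewrite (Omega_eq _ _ E1), (Omega_eq _ _ E2), Cl.
  eexists; eexists; split; [reflexivity|split; [reflexivity|]].
  destruct (classic (phi = psi)) as [Eq|Ne].
  { subst. rewrite E1 in E2. injection E2 as ->. split; [lia|congruence]. }
  assert (Lt : sqlt phi psi).
  { split; auto. intro H'. apply Ne. apply sqle_antisym; auto. }
  destruct (h_up_spec psi Tpsi) as [[l [Cl2 Len]] _].
  destruct (h_up_spec phi Tphi) as [_ Mphi].
  rewrite E1, E2.
  destruct (classic (e1 = e2)) as [->|Ne12].
  - assert (h_up psi <= h_up phi).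
    { destruct l as [|b l].
      - simpl in Len. pose proof (h_up_ge1 phi Tphi). lia.
      - rewrite <- Len. apply Mphi. exists (b :: l). split; [|reflexivity].
        destruct Cl2 as (_&[Hpb Hnb]&Ht&Hrest).
        assert (Lpb : sqlt phi b).
        { split. eapply sqle_trans; [apply Lt|exact Hpb].
          intro Hb. apply Hnb. eapply sqle_trans; [exact Hb|apply Lt]. }
        split; [exact Tphi|split; [exact Lpb|split; [|exact Hrest]]].
        intros e Ee. rewrite E1 in Ee. injection Ee as <-. apply Ht; auto. }
    split; [apply adj_mono; lia|congruence].
  - assert (S (h_up psi) <= h_up phi).
    { rewrite <- Len. apply Mphi. exists (psi :: l). split; [|reflexivity].
      split; [exact Tphi|split; [exact Lt|split; [|exact Cl2]]].
      intros e Ee. rewrite E1 in Ee. injection Ee as <-. rewrite E2. f_equal. apply other_type; auto. }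
    assert (adj e1 (Z.of_nat (cd (cluster psi)) - Z.of_nat (h_up phi)) <
            adj e2 (Z.of_nat (cd (cluster psi)) - Z.of_nat (h_up psi)))%Z
      by (apply adj_strict; auto; lia).
    split; [lia|auto].
Qed.


Lemma Forall2_nth_intro : forall (A B : Type) (R : A -> B -> Prop) l ks d1 d2,
  length l = length ks -> (forall i, i < length l -> R (nth i l d1) (nth i ks d2)) -> Forall2 R l ks.
Proof.
  intros A B R; induction l as [|x l IH]; intros [|k ks] d1 d2 Hl H; simpl in *; try discriminate; constructor.
  - apply (H 0); lia.
  - apply (IH ks d1 d2); [lia|]. intros i Hi. apply (H (S i)); lia.
Qed.

Lemma alt_incr_seq : forall n s o, alt_incr (map (fun i => (o + Z.of_nat i)%Z) (seq s n)).
Proof.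
  induction n as [|n IH]; intros s o; simpl; auto.
  destruct n as [|n]; simpl; auto.
  split; [lia|split].
  - rewrite Zpos_P_of_succ_nat. rewrite Z.add_succ_r. rewrite Z.odd_succ, <- Z.negb_odd.
    destruct (Z.odd (o + Z.of_nat s)); discriminate.
  - specialize (IH (S s) o). simpl in IH. exact IH.
Qed.

Lemma alt_incr_tail : forall k t, alt_incr (k :: t) -> alt_incr t.
Proof. intros k t H; destruct t; simpl in *; tauto. Qed.

Lemma alt_incr_sorted : forall t k, alt_incr (k :: t) -> Forall (fun x => (k < x)%Z) t.
Proof.
  induction t as [|x t IH]; intros k H; constructor.
  - destruct H; lia.
  - destruct H as (H1&_&H2). specialize (IH x H2). eapply Forall_impl; [|exact IH]. simpl; intros; lia.
Qed.

Lemma alt_incr_len : forall ks lo hi, alt_incr ks -> Forall (fun k => (lo <= k <= hi)%Z) ks ->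
  (Z.of_nat (length ks) <= Z.max 0 (hi - lo + 1))%Z.
Proof.
  induction ks as [|k ks IH]; intros lo hi H F; simpl.
  - lia.
  - inversion F; subst. pose proof (alt_incr_sorted _ _ H) as S.
    specialize (IH (k + 1)%Z hi (alt_incr_tail _ _ H)).
    assert (Forall (fun x => (k + 1 <= x <= hi)%Z) ks).
    { rewrite Forall_forall in *. intros x Hx. specialize (S x Hx). specialize (H3 x Hx). lia. }
    specialize (IH H0). lia.
Qed.


Section Part3.
Variable phi : form.
Hypothesis Td : forall f, cluster phi f -> tidy f.

Let C := cluster phi.

Lemma Cphi : C phi.
Proof. split; apply rt_refl. Qed.

Definition P_cd := fun n => exists l, alt_chain l /\ Forall C l /\ length l = n.

Lemma cd_spec : P_cd (cd C) /\ forall m, P_cd m -> m <= cd C.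
Proof.
  destruct (clos_finite (fsize phi) phi (le_n _) (Td _ Cphi)) as [L HL].
  apply (maxnat_spec P_cd (length L)).
  - exists 0, []. simpl; auto.
  - intros n [l [Ch [Fl <-]]]. apply NoDup_incl_length; [apply chain_nodup; auto|].
    intros g Hg. apply HL. rewrite Forall_forall in Fl. apply (Fl g Hg).
Qed.

Lemma C_tidy_fix : forall c, C c -> is_fix c -> tidy_fix c.
Proof. intros c Cc Fc; split; auto. Qed.

Lemma h_up_le : forall c, C c -> is_fix c -> h_up c <= cd C.
Proof.
  intros c Cc Fc. destruct (h_up_spec c (C_tidy_fix c Cc Fc)) as [[l [Ch Len]] _].
  rewrite <- Len. apply (proj2 cd_spec). exists (c :: l). split; auto. split; auto.
  constructor; auto. eapply chain_cluster; eauto.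
Qed.

Lemma K1 : forall l pre a suf, alt_chain l -> Forall C l -> length l = cd C -> l = pre ++ a :: suf ->
  h_up a = length (a :: suf).
Proof.
  intros l pre a suf Ch Fl Len ->.
  destruct (chain_split _ _ _ Ch) as [Ch1 Ch2].
  assert (Ta : tidy_fix a) by (eapply alt_chain_head; eauto).
  destruct (h_up_spec a Ta) as [[m [Chm Lm]] M].
  apply Nat.le_antisymm.
  - rewrite <- Lm. assert (length (pre ++ a :: m) <= cd C).
    { apply (proj2 cd_spec). exists (pre ++ a :: m). split; [apply chain_app; auto|split; auto].
      apply Forall_app in Fl. destruct Fl as [F1 F2]. apply Forall_app; split; auto.
      inversion F2; subst. constructor; auto. eapply chain_cluster; eauto. }
    rewrite length_app in *. simpl in *. lia.
  - apply M. exists suf; auto.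
Qed.

Section WithTop.
Variable T : form.
Hypothesis CT : C T.
Hypothesis FT : is_fix T.
Hypothesis MT : forall a, C a /\ is_fix a -> fsize T <= fsize a.

Lemma T_top : forall a, C a -> is_fix a -> sqle a T.
Proof.
  intros a Ca Fa. apply (top_sqle phi); auto.
  all: try (intros b Cb Fb; apply MT; split; auto).
Qed.

Lemma K2 : forall c, C c -> is_fix c -> h_up c = 1 -> ftype c = ftype T.
Proof.
  intros c Cc Fc H1. pose proof (T_top c Cc Fc) as Le.
  destruct (classic (c = T)) as [->|Ne]; auto.
  assert (Lt : sqlt c T) by (split; auto; intro; apply Ne; apply sqle_antisym; auto).
  destruct Fc as [e Ee]. destruct FT as [e' Ee'].
  rewrite Ee, Ee'. destruct (classic (e = e')) as [->|Ne']; auto. exfalso.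
  destruct (h_up_spec c (C_tidy_fix c Cc (ex_intro _ e Ee))) as [_ M].
  assert (2 <= h_up c); [|lia].
  apply M. exists [T]. split; [|reflexivity].
  split; [apply C_tidy_fix; auto; exists e; auto|split; [exact Lt|split]].
  - intros e0 E0. rewrite Ee in E0. injection E0 as <-. rewrite Ee'. f_equal. apply other_type; auto.
  - split; [apply C_tidy_fix; auto|exact I].
Qed.
End WithTop.


Lemma V_gen : forall l e, alt_chain l -> Forall C l -> length l = cd C -> ftype (hd FTop l) = Some e ->
  forall i, i < cd C -> h_up (nth i l FTop) = cd C - i /\
    ftype (nth i l FTop) = Some (Nat.iter i fp_bar e) /\ C (nth i l FTop) /\ is_fix (nth i l FTop).
Proof.
  intros l e Ch Fl Len He i Hi.
  destruct (nth_split l FTop (n:=i) ltac:(lia)) as [pre [suf [El Lp]]].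
  set (a := nth i l FTop) in *.
  assert (Ha : h_up a = length (a :: suf)) by (eapply K1; eauto).
  assert (Ht : ftype a = Some (Nat.iter i fp_bar e)).
  { rewrite <- Lp. apply (chain_types pre a suf e); [rewrite <- El; auto|].
    rewrite El in He. destruct pre; simpl in *; auto. }
  split; [|split; [exact Ht|split]].
  - rewrite Ha. rewrite El in Len. rewrite length_app in Len. simpl in *. lia.
  - rewrite Forall_forall in Fl. apply Fl. rewrite El. apply in_or_app; right; left; auto.
  - exists (Nat.iter i fp_bar e); auto.
Qed.

Lemma OmC : forall c e, C c -> ftype c = Some e ->
  Omega_g c = Some (adj e (Z.of_nat (cd C) - Z.of_nat (h_up c))).
Proof.
  intros c e Cc Ec. rewrite (Omega_eq _ _ Ec). rewrite (cluster_eq phi c Cc). reflexivity.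
Qed.

Lemma Omega_fix : forall f k, Omega_g f = Some k -> is_fix f.
Proof. intros f k H. unfold Omega_g in H. destruct (ftype f) eqn:E; [exists f0; auto|discriminate]. Qed.

Definition P_ind := fun n => exists l : list form,
    Forall (fun f => C f /\ is_fix f) l /\ length l = n /\
    exists ks, Forall2 (fun f k => Omega_g f = Some k) l ks /\ alt_incr ks.

Theorem part3 : cd C = ind C /\
     exists ks : list Z, NoDup ks /\
       (forall k, In k ks <-> range_Omega C k) /\
       length ks = cd C.
Proof.
  destruct cd_spec as [[l0 [Ch0 [F0 L0]]] Mcd].
  set (n := cd C) in *.
  destruct (Nat.eq_dec n 0) as [Z0|NZ].
  - assert (NoFix : forall c, C c -> ~ is_fix c).
    { intros c Cc Fc. assert (1 <= n); [|lia]. apply Mcd. exists [c]. split; [split; [split; auto|exact I]|].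
      split; auto. }
    split.
    + unfold ind. symmetry. fold P_ind. rewrite Z0. apply maxnat_eq.
      * exists []. split; auto. split; auto. exists []. split; [constructor|exact I].
      * intros m [l [Fl [Lm _]]]. destruct l as [|f l]; simpl in *; [lia|].
        inversion Fl; subst. exfalso. destruct H1. eapply NoFix; eauto.
    + exists []. split; [constructor|split; [|simpl; auto]].
      intros k; split; [intros []|]. intros [f [Cf Of]]. exfalso. eapply NoFix; eauto. eapply Omega_fix; eauto.
  - destruct l0 as [|a1 rest]; [simpl in L0; lia|].
    destruct (alt_chain_head _ _ Ch0) as [Ta1 [e1 E1]].
    assert (Ca1 : C a1) by (inversion F0; auto).
    destruct (min_exists (fun a => C a /\ is_fix a) fsize (ex_intro _ a1 (conj Ca1 (ex_intro _ e1 E1))))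
      as [T [[CT FT] MT]].
    set (off := match e1 with NuT => 0%Z | MuT => 1%Z end).
    pose proof (V_gen (a1 :: rest) e1 Ch0 F0 L0 E1) as V0. fold n in V0.
    assert (Val : forall i, i < n -> Omega_g (nth i (a1 :: rest) FTop) = Some (off + Z.of_nat i)%Z).
    { intros i Hi. destruct (V0 i Hi) as (Hh&Ht&Hc&_). rewrite (OmC _ _ Hc Ht), Hh. fold n.
      replace (Z.of_nat n - Z.of_nat (n - i))%Z with (Z.of_nat i) by lia.
      rewrite adj_iter. reflexivity. }
    destruct (V0 (n - 1) ltac:(lia)) as (HhL&HtL&HcL&HfL).
    assert (Bnd : forall c k, C c -> Omega_g c = Some k -> (off <= k <= off + Z.of_nat n - 1)%Z).
    { intros c k Cc Oc. pose proof (Omega_fix _ _ Oc) as Fc. destruct Fc as [ec Ec].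
      rewrite (OmC _ _ Cc Ec) in Oc. fold n in Oc. injection Oc as <-.
      assert (Fc : is_fix c) by (exists ec; auto).
      pose proof (h_up_ge1 c (C_tidy_fix c Cc Fc)) as G1. pose proof (h_up_le c Cc Fc) as G2.
      fold n in G2.
      pose proof (adj_bounds ec (Z.of_nat n - Z.of_nat (h_up c))) as AB.
      assert (Hoff : (0 <= off <= 1)%Z) by (unfold off; destruct e1; lia).
      destruct (Nat.eq_dec (h_up c) 1) as [H1|H1].
      - assert (ftype c = ftype (nth (n-1) (a1 :: rest) FTop)).
        { rewrite (K2 T CT FT MT c Cc Fc H1). symmetry. apply (K2 T CT FT MT); auto. lia. }
        rewrite Ec, HtL in H. injection H as ->. rewrite H1.
        replace (Z.of_nat n - Z.of_nat 1)%Z with (Z.of_nat (n - 1)) by lia.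
        rewrite adj_iter. fold off. lia.
      - destruct (Nat.eq_dec (h_up c) n) as [Hn|Hn].
        + destruct (h_up_spec c (C_tidy_fix c Cc Fc)) as [[m [Chm Lm]] _].
          assert (Fm : Forall C (c :: m)) by (constructor; auto; eapply chain_cluster; eauto).
          assert (Lm' : length (c :: m) = cd C) by (rewrite Lm; auto).
          destruct (V_gen (c :: m) ec Chm Fm Lm' Ec (n - 1) ltac:(lia)) as (Hh2&Ht2&Hc2&Hf2).
          assert (ftype (nth (n-1) (c :: m) FTop) = ftype (nth (n-1) (a1 :: rest) FTop)).
          { rewrite (K2 T CT FT MT _ Hc2 Hf2 ltac:(lia)). symmetry. apply (K2 T CT FT MT); auto. lia. }
          rewrite Ht2, HtL in H. injection H as H. apply iter_inj in H. subst ec.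
          rewrite Hn. replace (Z.of_nat n - Z.of_nat n)%Z with 0%Z by lia.
          unfold off, adj; destruct e1; cbn [Z.odd]; lia.
        + lia. }
    set (ks := map (fun i => (off + Z.of_nat i)%Z) (seq 0 n)).
    assert (Ks : forall k, In k ks <-> exists i, k = (off + Z.of_nat i)%Z /\ i < n).
    { intros k. unfold ks. rewrite in_map_iff. split.
      - intros [i [<- Hi]]. apply in_seq in Hi. exists i; split; auto; lia.
      - intros [i [-> Hi]]. exists i; split; auto. apply in_seq; lia. }
    assert (Rng : forall k, In k ks <-> range_Omega C k).
    { intros k; rewrite Ks; split.
      - intros [i [-> Hi]]. exists (nth i (a1 :: rest) FTop). split; [apply (V0 i Hi)|apply Val; auto].
      - intros [f [Cf Of]]. specialize (Bnd f k Cf Of). exists (Z.to_nat (k - off)). split; lia. }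
    assert (Lks : length ks = n) by (unfold ks; rewrite length_map, length_seq; auto).
    split.
    + unfold ind. symmetry. fold P_ind. apply maxnat_eq.
      * exists (a1 :: rest). split; [|split; [auto|]].
        { rewrite Forall_forall. intros f Hf. apply In_nth with (d := FTop) in Hf.
          destruct Hf as [i [Hi <-]]. rewrite L0 in Hi. destruct (V0 i Hi) as (_&_&Hc&Hfx). auto. }
        exists ks. split; [|apply alt_incr_seq].
        apply Forall2_nth_intro with (d1 := FTop) (d2 := 0%Z); [rewrite Lks; auto|].
        intros i Hi. rewrite L0 in Hi. rewrite Val by auto. f_equal. unfold ks.
        rewrite nth_indep with (d' := (off + Z.of_nat 0)%Z) by (rewrite length_map, length_seq; auto).
        rewrite (map_nth (fun i0 => (off + Z.of_nat i0)%Z) (seq 0 n) 0 i), seq_nth by auto. reflexivity.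
      * intros m [l [Fl [<- [ks' [F2 Ai]]]]].
        assert (Fk : Forall (fun k => (off <= k <= off + Z.of_nat n - 1)%Z) ks').
        { clear - F2 Fl Bnd. induction F2 as [|x y l1 l2 Hxy F2 IH]; constructor.
          - inversion Fl as [|? ? [Cx _] _]. eapply Bnd; eauto.
          - inversion Fl as [|? ? _ Fl']. apply IH; auto. }
        pose proof (alt_incr_len ks' _ _ Ai Fk). rewrite (Forall2_length F2). lia.
    + exists ks. split; [|split; auto].
      unfold ks. apply NoDup_map_inv with (f := fun k => Z.to_nat (k - off)).
      rewrite map_map. erewrite map_ext; [rewrite map_id; apply seq_NoDup|]. intros i; simpl; lia.
Qed.
End Part3.


Theorem mainTheorem4 :
  (* (1) *)
  (forall xi e, tidy xi -> ftype xi = Some e ->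
     exists k, Omega_g xi = Some k /\ has_parity e k) /\
  (* (2) *)
  (forall phi psi, tidy_fix phi -> tidy_fix psi -> sqle phi psi ->
     exists a b, Omega_g phi = Some a /\ Omega_g psi = Some b /\
       (a <= b)%Z /\ (ftype phi <> ftype psi -> (a < b)%Z)) /\
  (* (3) *)
  (forall phi, (forall f, cluster phi f -> tidy f) ->
     cd (cluster phi) = ind (cluster phi) /\
     exists ks : list Z, NoDup ks /\
       (forall k, In k ks <-> range_Omega (cluster phi) k) /\
       length ks = cd (cluster phi)).
Proof.
  split; [exact part1|split; [exact part2|]].
  intros phi Td. exact (part3 phi Td).
Qed.
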